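(* Let $(E,q)$ be a formed space and $U\in\mathcal{P}^\omega(E)$. Then $\mathcal{P}^\omega(E)$ and $\mathcal{P}^\omega(E,U)$ are graded posets, with $\dim\mathcal{P}^\omega(E)=g(E)-1$ and $\dim\mathcal{P}^\omega(E,U)=g(E)-\dim U+\dim R(E)=g(U^\perp)$.
   Context: Formed spaces over a field $\mathbb{F}$ with involution $\sigma$ ($\bar c=\sigma(c)$), $\varepsilon$ ($\varepsilon\bar\varepsilon=1$) and additive subgroup $\Lambda$ with $\{c-\varepsilon\bar c\}\le\Lambda\le\{c:c+\varepsilon\bar c=0\}$: a form on a finite-dimensional $E$ is a sesquilinear $f$ ($f(av,bw)=\bar af(v,w)b$) modulo those with $f(v,v)\in\Lambda$, $f(w,v)=-\varepsilon\overline{f(v,w)}$. $\omega_q(v,w)=q(v,w)+\varepsilon\overline{q(w,v)}$, $Q_q(v)=q(v,v)+\Lambda$. $K(E)=\{v:\omega_q(E,v)=0\}$, $R(E)=\{v\in K(E):Q_q(v)=0\}$, $U^\perp=\{v:\omega_q(v,U)=0\}$, isotropic means $\omega_q,Q_q$ vanish on the subspace, genus $g(E)$ = max dimension of isotropic subspace minus $\dim R(E)$; $U^\perp$ carries the restricted form. $\mathcal{P}^\omega(E)$ is the poset (inclusion) of isotropic $W$ with $R(E)<W<E$, and $\mathcal{P}^\omega(E,U)$ its subposet of those with $W+U^\perp=E$. A poset is graded if all maximal chains have the same finite length; its dimension is the maximal length $d$ of a chain $a_0<\dots<a_d$. *)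

(* Defs.v *)
From HB Require Import structures.
From mathcomp Require Import all_boot all_order all_algebra.
From mathcomp Require Import boolp.
Set Implicit Arguments.
Unset Strict Implicit.
Unset Printing Implicit Defensive.
Import Order.TTheory GRing.Theory Num.Theory.
Local Open Scope ring_scope.

(* ---------- Formed spaces ----------
   F : field, sigma : involution (ring morphism with sigma o sigma = id),
   eps with eps * sigma eps = 1, Lam : form parameter (predicate on F),
   E : finite-dimensional F-vector space, q : E -> E -> F a sesquilinear
   form (a representative of the form class; every notion below only
   depends on omega_q and Q_q, hence on the class). *)

Definition form_parameter (F : fieldType) (sigma : F -> F) (eps : F)
    (Lam : F -> Prop) : Prop :=
  [/\ (forall c, sigma (sigma c) = c),
      eps * sigma eps = 1,
      Lam 0 /\ (forall x y, Lam x -> Lam y -> Lam (x - y)),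
      (forall c, Lam (c - eps * sigma c)) /\
      (forall c, Lam c -> c + eps * sigma c = 0)
    & (forall a c, Lam c -> Lam (sigma a * c * a))].

Definition sesquilinear (F : fieldType) (sigma : F -> F) (E : vectType F)
    (q : E -> E -> F) : Prop :=
  [/\ (forall a b v w, q (a *: v) (b *: w) = sigma a * q v w * b),
      (forall u v w, q (u + v) w = q u w + q v w)
    & (forall u v w, q u (v + w) = q u v + q u w)].

Section FormedSpaces.
Context (F : fieldType) (sigma : F -> F) (eps : F) (Lam : F -> Prop)
        (E : vectType F) (q : E -> E -> F).

Definition omega (v w : E) : F := q v w + eps * sigma (q w v).

(* Q_q(v) = 0  iff  q(v,v) \in Lam *)
Definition Qzero (v : E) : Prop := Lam (q v v).

Definition isotropic (W : {vspace E}) : Prop :=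
  forall v w, v \in W -> w \in W -> omega v w = 0 /\ Qzero v.

(* An ambient formed space is given as a set S of vectors (a subspace of E,
   e.g. E itself or U^perp) carrying the restricted form. *)
Definition Kset (S : E -> Prop) (v : E) : Prop :=
  S v /\ forall w, S w -> omega w v = 0.
Definition Rset (S : E -> Prop) (v : E) : Prop := Kset S v /\ Qzero v.

Definition dimset (P : E -> Prop) : nat :=
  \max_(i < (\dim (fullv : {vspace E})).+1 |
        `[< exists W : {vspace E}, (forall v, v \in W -> P v) /\ \dim W = i >]) i.

Definition maxiso (S : E -> Prop) : nat :=
  \max_(i < (\dim (fullv : {vspace E})).+1 |
        `[< exists W : {vspace E},
              (forall v, v \in W -> S v) /\ isotropic W /\ \dim W = i >]) i.

Definition genus (S : E -> Prop) : int :=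
  (maxiso S)%:Z - (dimset (Rset S))%:Z.

Definition allE : E -> Prop := fun _ => True.

Definition perp (U : {vspace E}) (v : E) : Prop :=
  forall u, u \in U -> omega v u = 0.

Definition Pomega (W : {vspace E}) : Prop :=
  [/\ isotropic W,
      (forall v, Rset allE v -> v \in W),
      (exists2 v, v \in W & ~ Rset allE v)
    & W != fullv].

Definition PomegaU (U W : {vspace E}) : Prop :=
  Pomega W /\ forall e : E, exists w u, [/\ w \in W, perp U u & e = w + u].

End FormedSpaces.

Section Posets.
Context (F : fieldType) (E : vectType F).

Definition ltv : rel {vspace E} := fun V W => (V <= W)%VS && (V != W).

Definition chain (P : {vspace E} -> Prop) (s : seq {vspace E}) : Prop :=
  (forall W, W \in s -> P W) /\ sorted ltv s.

Definition maximal_chain (P : {vspace E} -> Prop) (s : seq {vspace E}) : Prop :=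
  chain P s /\ forall t, chain P t -> {subset s <= t} -> {subset t <= s}.

Definition chain_length (s : seq {vspace E}) : int := (size s)%:Z - 1.

Definition graded (P : {vspace E} -> Prop) : Prop :=
  exists d : int, forall s, maximal_chain P s -> chain_length s = d.

Definition poset_dim (P : {vspace E} -> Prop) (d : int) : Prop :=
  (exists s, chain P s /\ chain_length s = d) /\
  (forall s, chain P s -> chain_length s <= d).

End Posets.

(* Main.v *)
Require Import Defs.
From HB Require Import structures.
From mathcomp Require Import all_boot all_order all_algebra.
From mathcomp Require Import boolp zify ring.
Set Implicit Arguments.
Unset Strict Implicit.
Unset Printing Implicit Defensive.
Import Order.TTheory GRing.Theory Num.Theory.
Local Open Scope ring_scope.

Section Chains.
Variables (F : fieldType) (E : vectType F) (P : {vspace E} -> Prop) (a b : nat).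
Local Notation ltv := (@ltv F E).

Lemma ltv_trans : transitive ltv.
Proof.
move=> y x z /andP [xy nxy] /andP [yz nyz]; apply/andP; split.
  exact: subv_trans xy yz.
apply/negP => /eqP exz; subst z; apply/negP: nxy; rewrite negbK.
by apply/eqP; apply: subv_anti; rewrite xy yz.
Qed.

Lemma ltv_irr : irreflexive ltv.
Proof. by move=> x; rewrite /ltv eqxx andbF. Qed.

Lemma ltv_dim (V W : {vspace E}) : ltv V W -> (\dim V < \dim W)%N.
Proof.
move=> /andP [VW nVW]; rewrite ltnNge; apply: contra nVW => h.
by rewrite eqEdim VW h.
Qed.

Lemma ltv_le (V W : {vspace E}) : ltv V W -> (V <= W)%VS.
Proof. by case/andP. Qed.

Lemma dim_addline (A : {vspace E}) x : (\dim (A + <[x]>) <= (\dim A).+1)%N.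
Proof.
apply: leq_trans (dimv_add_leqif _ _).1 _.
by rewrite -addn1 leq_add2l dim_vline; case: (x != 0).
Qed.

Hypothesis Hdim : forall W, P W -> (a < \dim W <= b)%N.
Hypothesis Hconv : forall A B X, P A -> P B -> (A <= X)%VS -> (X <= B)%VS -> P X.
Hypothesis Hbot : forall B, P B -> (a.+1 < \dim B)%N -> exists X, P X /\ ltv X B.
Hypothesis Htop : forall A, P A -> (\dim A < b)%N -> exists X, P X /\ ltv A X.
Hypothesis Hne : exists X, P X.

Lemma between A B : P A -> P B -> ltv A B -> ((\dim A).+1 < \dim B)%N ->
  exists X, [/\ P X, ltv A X & ltv X B].
Proof.
move=> PA PB AB dAB.
have : ~~ (B <= A)%VS.
  apply/negP => BA; move: AB => /andP [AB]; apply/negP; rewrite negbK.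
  by apply/eqP; apply: subv_anti; rewrite AB BA.
case/subvPn => x xB xA.
have XB : (A + <[x]> <= B)%VS by rewrite subv_add ltv_le // -memvE.
have AX : (A <= A + <[x]>)%VS by apply: addvSl.
exists (A + <[x]>)%VS; split.
- exact: Hconv PA PB AX XB.
- rewrite /Defs.ltv AX /=; apply/negP => /eqP e; apply/negP: xA; rewrite negbK e.
  by apply: (subvP (addvSr _ _)); apply: memv_line.
- rewrite /Defs.ltv XB /=; apply/negP => /eqP e.
  by have := dim_addline A x; rewrite e; lia.
Qed.

Lemma chain_ins (s : seq {vspace E}) (lo : option {vspace E}) :
  (forall W, W \in s -> P W) -> sorted ltv s ->
  (if lo is Some A then P A /\ all (ltv A) s else True) ->
  (size s < b - (if lo is Some A then \dim A else a))%N ->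
  exists t, [/\ forall W, W \in t -> P W, sorted ltv t, {subset s <= t},
     size t = (size s).+1 & (if lo is Some A then all (ltv A) t else True)].
Proof.
elim: s lo => [|x s IH] lo Ps ss hlo hsz.
  case: lo hlo hsz => [A|] /= hlo hsz.
    case: hlo => PA _.
    have [X [PX AX]] := Htop PA (ltac:(lia)).
    exists [:: X]; split=> //.
      by move=> W; rewrite inE => /eqP ->.
    by rewrite /= AX.
  case: Hne => X PX; exists [:: X]; split=> //.
  by move=> W; rewrite inE => /eqP ->.
have Px : P x by apply: Ps; rewrite inE eqxx.
have Ps' : forall W, W \in s -> P W by move=> W Ws; apply: Ps; rewrite inE Ws orbT.
have ss' : sorted ltv s by move: ss => /= /path_sorted.
have allx : all (ltv x) s by apply: order_path_min ss; apply: ltv_trans.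
have hla : ((if lo is Some A then \dim A else a) < \dim x)%N.
  case: lo hlo {hsz} => [A [_ /= /andP [Ax _]]|_]; first exact: ltv_dim.
  by have := Hdim Px; case/andP.
case: (ltnP (if lo is Some A then \dim A else a).+1 (\dim x)) => hgap.
  have [X [PX hX hXx]] : exists X, [/\ P X,
      (if lo is Some A then ltv A X else True) & ltv X x].
    case: lo hlo hla hgap {hsz} => [A [PA /= /andP [Ax _]]|_] hla hgap.
      by have [X [PX AX Xx]] := between PA Px Ax hgap; exists X.
    by have [X [PX Xx]] := Hbot Px hgap; exists X.
  exists [:: X, x & s]; split.
  - move=> W; rewrite inE => /orP [/eqP ->|]; [exact: PX | exact: Ps].
  - by rewrite /= hXx.
  - by move=> W Ws; rewrite inE Ws orbT.
  - by [].
  - case: lo hlo hX {hla hgap hsz} => [A [_ hA]|] // hX.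
    by rewrite /= hX.
have dx : \dim x = (if lo is Some A then \dim A else a).+1 by lia.
have [t [Pt st sub szt hxt]] := IH (Some x) Ps' ss' (conj Px allx)
   (ltac:(rewrite /= in hsz; lia)).
exists (x :: t); split.
- move=> W; rewrite inE => /orP [/eqP ->|]; [exact: Px | exact: Pt].
- by rewrite /= (path_sortedE ltv_trans) hxt st.
- move=> W; rewrite !inE => /orP [->//|/sub ->]; by rewrite orbT.
- by rewrite /= szt.
- case: lo hlo {hla hgap dx hsz} => [A [_ /= /andP [Ax _]]|] //.
  rewrite /= Ax /=; apply/allP => y yt.
  by apply: ltv_trans Ax _; move/allP: hxt; apply.
Qed.

Lemma chain_size_gen (s : seq {vspace E}) lo :
  (forall W, W \in s -> P W) -> sorted ltv s ->
  (forall W, W \in s -> lo < \dim W)%N -> (size s <= b - lo)%N.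
Proof.
elim: s lo => [|x s IH] lo //= Ps ss hlo.
have Px : P x by apply: Ps; rewrite inE eqxx.
have Ps' : forall W, W \in s -> P W by move=> W Ws; apply: Ps; rewrite inE Ws orbT.
have ss' : sorted ltv s by move: ss => /path_sorted.
have allx : all (ltv x) s by apply: order_path_min ss; apply: ltv_trans.
have := IH (\dim x) Ps' ss' (fun W Ws => ltv_dim (allP allx W Ws)).
have := hlo x (mem_head _ _); have := Hdim Px; lia.
Qed.

Lemma chain_size s : chain P s -> (size s <= b - a)%N.
Proof.
case=> Ps ss; apply: chain_size_gen => // W /Ps /Hdim; lia.
Qed.

Lemma chains_main : graded P /\ poset_dim P ((b - a)%:Z - 1).
Proof.
have ab : (a < b)%N by case: Hne => X /Hdim; lia.
have maxs : forall s, maximal_chain P s -> size s = (b - a)%N.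
  move=> s [[Ps ss] hmax]; apply/eqP; rewrite eqn_leq chain_size //=.
  rewrite leqNgt; apply/negP => lt.
  have [t [Pt st sub szt _]] := chain_ins (lo := None) Ps ss I lt.
  have := hmax t (conj Pt st) sub => /(uniq_leq_size (sorted_uniq ltv_trans ltv_irr st)).
  by rewrite szt ltnn.
split.
  exists ((b - a)%:Z - 1) => s /maxs; rewrite /chain_length => ->; lia.
split.
  have : forall k, (k <= b - a)%N -> exists s, chain P s /\ size s = k.
    elim=> [|k IH] hk; first by exists [::]; split=> //; split=> //.
    have [s [[Ps ss] sz]] := IH (ltnW hk).
    have [t [Pt st _ szt _]] := chain_ins (lo := None) Ps ss I (ltac:(lia)).
    by exists t; split=> //; rewrite szt sz.
  move=> /(_ (b - a)%N (leqnn _)) [s [cs sz]]; exists s; split=> //.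
  rewrite /chain_length sz; lia.
move=> s /chain_size; rewrite /chain_length; lia.
Qed.

End Chains.
Lemma max_exists (D : nat -> Prop) n : (exists k0, D k0) -> (forall k, D k -> (k <= n)%N) ->
  exists m, D m /\ forall k, D k -> (k <= m)%N.
Proof.
move=> [k0 D0] ub.
have exP : exists i, `[< D i >] by exists k0; apply/asboolP.
have ubP : forall i, `[< D i >] -> (i <= n)%N by move=> i /asboolP; apply: ub.
case: (ex_maxnP exP ubP) => m /asboolP Dm maxm.
by exists m; split => // k Dk; apply: maxm; apply/asboolP.
Qed.

Lemma bigmax_eq n (P : nat -> Prop) m : P m -> (m <= n)%N ->
  (forall k, (k <= n)%N -> P k -> (k <= m)%N) ->
  (\max_(i < n.+1 | `[< P i >]) i)%N = m.
Proof.
move=> Pm mn hk; apply/eqP; rewrite eqn_leq; apply/andP; split.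
  apply/bigmax_leqP => i /asboolP Pi; apply: hk => //; rewrite -ltnS; exact: ltn_ord.
have mn' : (m < n.+1)%N by [].
have := @leq_bigmax_cond _ (fun i : 'I_n.+1 => `[< P i >]) (fun i => nat_of_ord i) (Ordinal mn').
by apply; apply/asboolP.
Qed.

Section Basics.
Variables (F : fieldType) (sigma : {rmorphism F -> F}) (eps : F) (Lam : F -> Prop)
  (E : vectType F) (q : E -> E -> F).
Hypothesis hLam : form_parameter sigma eps Lam.
Hypothesis hq : sesquilinear sigma q.

Local Notation om := (omega sigma eps q).
Local Notation Qz := (Qzero Lam q).
Local Notation iso := (isotropic sigma eps Lam q).

Lemma sigK c : sigma (sigma c) = c.
Proof. by case: hLam. Qed.
Lemma epsK : eps * sigma eps = 1.
Proof. by case: hLam. Qed.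
Lemma Lam0 : Lam 0.
Proof. by case: hLam => _ _ []. Qed.
Lemma LamB x y : Lam x -> Lam y -> Lam (x - y).
Proof. by case: hLam => _ _ [_ h] _ _; apply: h. Qed.
Lemma LamN x : Lam x -> Lam (- x).
Proof. by move=> hx; rewrite -sub0r; apply: LamB => //; apply: Lam0. Qed.
Lemma LamD x y : Lam x -> Lam y -> Lam (x + y).
Proof. by move=> hx hy; rewrite -[y]opprK; apply: LamB => //; apply: LamN. Qed.
Lemma Lam_tr c : Lam (c - eps * sigma c).
Proof. by case: hLam => _ _ _ [h _] _; apply: h. Qed.
Lemma Lam_sym c : Lam c -> c + eps * sigma c = 0.
Proof. by case: hLam => _ _ _ [_ h] _; apply: h. Qed.
Lemma Lam_conj a c : Lam c -> Lam (sigma a * c * a).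
Proof. by case: hLam => _ _ _ _ h; apply: h. Qed.

Lemma qZZ a b v w : q (a *: v) (b *: w) = sigma a * q v w * b.
Proof. by case: hq. Qed.
Lemma qDl u v w : q (u + v) w = q u w + q v w.
Proof. by case: hq. Qed.
Lemma qDr u v w : q u (v + w) = q u v + q u w.
Proof. by case: hq. Qed.
Lemma qZl a v w : q (a *: v) w = sigma a * q v w.
Proof. by rewrite -[w in LHS]scale1r qZZ mulr1. Qed.
Lemma qZr b v w : q v (b *: w) = q v w * b.
Proof. by rewrite -[v in LHS]scale1r qZZ rmorph1 mul1r. Qed.

Lemma omDl u v w : om (u + v) w = om u w + om v w.
Proof. rewrite /omega qDl qDr rmorphD mulrDr; ring. Qed.
Lemma omDr u v w : om u (v + w) = om u v + om u w.
Proof. rewrite /omega qDl qDr rmorphD mulrDr; ring. Qed.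
Lemma omZl a v w : om (a *: v) w = sigma a * om v w.
Proof. rewrite /omega qZl qZr rmorphM ?sigK; ring. Qed.
Lemma omZr b v w : om v (b *: w) = om v w * b.
Proof. rewrite /omega qZl qZr rmorphM ?sigK; ring. Qed.
Lemma om_sym v w : om w v = eps * sigma (om v w).
Proof.
rewrite /omega rmorphD rmorphM sigK mulrDr mulrA epsK mul1r; ring.
Qed.
Lemma om_sym0 v w : om v w = 0 -> om w v = 0.
Proof. by move=> h; rewrite om_sym h rmorph0 mulr0. Qed.
Lemma om0l w : om 0 w = 0.
Proof. by rewrite -(scale0r 0) omZl rmorph0 mul0r. Qed.
Lemma om0r w : om w 0 = 0.
Proof. by rewrite -(scale0r 0) omZr mulr0. Qed.
Lemma omNl v w : om (- v) w = - om v w.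
Proof. by rewrite -scaleN1r omZl rmorphN1 mulN1r. Qed.
Lemma omNr v w : om v (- w) = - om v w.
Proof. by rewrite -scaleN1r omZr mulrN1. Qed.
Lemma omBl u v w : om (u - v) w = om u w - om v w.
Proof. by rewrite omDl omNl. Qed.
Lemma omBr u v w : om u (v - w) = om u v - om u w.
Proof. by rewrite omDr omNr. Qed.

Lemma Qz0 : Qz 0.
Proof. by rewrite /Qzero -(scale0r 0) qZZ rmorph0 !mul0r; apply: Lam0. Qed.
Lemma QzZ a v : Qz v -> Qz (a *: v).
Proof. by rewrite /Qzero qZZ; apply: Lam_conj. Qed.
Lemma QzD u v : Qz u -> Qz v -> om u v = 0 -> Qz (u + v).
Proof.
rewrite /Qzero => hu hv huv.
have -> : q (u + v) (u + v) = q u u + q v v + (q u v - eps * sigma (q u v)).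
  move: huv; rewrite qDl !qDr /omega => h.
  have -> : q v u = - eps * sigma (q u v).
    have := congr1 (fun x => eps * sigma x) h.
    rewrite rmorphD rmorphM sigK rmorph0 mulr0 mulrDr mulrA epsK mul1r => h2.
    by rewrite mulNr; apply/eqP; rewrite -subr_eq0 opprK addrC h2.
  ring.
by apply: LamD; [apply: LamD|apply: Lam_tr].
Qed.
Lemma omQ v : Qz v -> om v v = 0.
Proof. by move=> h; apply: Lam_sym. Qed.


Definition subpred (P : E -> Prop) :=
  P 0 /\ forall a u v, P u -> P v -> P (a *: u + v).

Lemma vs_ext (A B : {vspace E}) : (forall v, v \in A <-> v \in B) -> A = B.
Proof. by move=> h; apply/vspaceP => v; apply/idP/idP => /h. Qed.

Lemma ltdim (U V : {vspace E}) : (U <= V)%VS -> ~~ (V <= U)%VS -> (\dim U < \dim V)%N.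
Proof.
move=> UV nVU; rewrite ltnNge; apply: contra nVU => h.
have /eqP <- : U == V by rewrite eqEdim UV h.
exact: subvv.
Qed.

Lemma exists_vs P : subpred P -> exists V : {vspace E}, forall v, v \in V <-> P v.
Proof.
case=> P0 Pc.
have PZ a u : P u -> P (a *: u) by move=> Pu; rewrite -[a *: u]addr0; apply: Pc.
have PD u v : P u -> P v -> P (u + v) by move=> *; rewrite -[u]scale1r; apply: Pc.
pose D k := exists V : {vspace E}, (forall v, v \in V -> P v) /\ \dim V = k.
have D0 : D 0%N.
  exists 0%VS; split; last by rewrite dimv0.
  by move=> v; rewrite memv0 => /eqP ->.
have ub : forall k, D k -> (k <= \dim (fullv : {vspace E}))%N.
  by move=> k [V [_ <-]]; apply: dimvS; apply: subvf.
case: (max_exists (ex_intro _ _ D0) ub) => m [[V [hV dV]] hm].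
exists V => v; split; first exact: hV.
move=> Pv; case: (boolP (v \in V)) => // nv; exfalso.
have : D (\dim (V + <[v]>)).
  exists (V + <[v]>)%VS; split=> //.
  move=> x /memv_addP [y yV [z /vlineP [k ->] ->]].
  by apply: PD; [exact: hV | exact: PZ].
move/hm; rewrite -dV; apply/negP; rewrite -ltnNge; apply: ltdim; first exact: addvSl.
apply/negP => /subvP h; apply/negP: nv; rewrite negbK; apply: h.
by apply: (subvP (addvSr _ _)); apply: memv_line.
Qed.

Lemma ker1 (S T : {vspace E}) (f : E -> F) :
  (forall a u v, f (a *: u + v) = a * f u + f v) ->
  (forall v, v \in T <-> v \in S /\ f v = 0) -> (\dim S <= \dim T + 1)%N.
Proof.
move=> fl hT.
have f0 : f 0 = 0.
  have := fl 1 0 0; rewrite scale1r addr0 mul1r => h.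
  by apply: (addrI (f 0)); rewrite addr0 -h.
have fB u c s : f (u - c *: s) = f u - c * f s.
  by rewrite addrC -scaleNr fl mulNr addrC.
case: (pselect (exists2 s, s \in S & f s != 0)) => [[s sS fs]|nos].
  have : (S <= T + <[s]>)%VS.
    apply/subvP => v vS.
    have -> : v = (v - (f v / f s) *: s) + (f v / f s) *: s by rewrite subrK.
    apply: memv_add; last by apply: memvZ; apply: memv_line.
    apply/hT; split; first by apply: memvB => //; apply: memvZ.
    by rewrite fB divfK // subrr.
  move/dimvS => h; apply: leq_trans h _.
  apply: leq_trans (dimv_add_leqif _ _).1 _.
  by rewrite leq_add2l dim_vline; case: (s != 0).
have : (S <= T)%VS.
  apply/subvP => v vS; apply/hT; split => //.
  by case: (eqVneq (f v) 0) => // ne; exfalso; apply: nos; exists v.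
by move/dimvS => h; apply: leq_trans h (leq_addr _ _).
Qed.

Lemma LBs (s : seq E) (S : {vspace E}) : exists T : {vspace E},
  (forall v, v \in T <-> v \in S /\ forall x, x \in <<s>>%VS -> om x v = 0) /\
  (\dim S <= \dim T + size s)%N.
Proof.
elim: s S => [|c s IH] S.
  exists S; split; last by rewrite addn0.
  move=> v; split; last by case.
  move=> vS; split=> // x; rewrite span_nil memv0 => /eqP ->; exact: om0l.
case: (IH S) => T [hT dT].
have sp : subpred (fun v => v \in T /\ om c v = 0).
  split; first by split; [exact: mem0v| exact: om0r].
  move=> a u v [uT uc] [vT vc]; split; first by apply: memvD => //; apply: memvZ.
  by rewrite omDr omZr uc vc mul0r addr0.
case: (exists_vs sp) => T' hT'.
exists T'; split.
  move=> v; split.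
    move/hT' => [/hT [vS hx] hc]; split=> // x.
    rewrite span_cons => /memv_addP [y /vlineP [k ->] [z zs ->]].
    by rewrite omDl omZl hc hx // mulr0 add0r.
  move=> [vS hx]; apply/hT'; split.
    apply/hT; split=> // x xs; apply: hx; rewrite span_cons.
    exact: (subvP (addvSr _ _)).
  by apply: hx; rewrite span_cons; apply: (subvP (addvSl _ _)); apply: memv_line.
have := @ker1 T T' (om c).
have fl : forall a u v, om c (a *: u + v) = a * om c u + om c v.
  by move=> a u v; rewrite omDr omZr mulrC.
move=> /(_ fl hT') h; rewrite /=; lia.
Qed.

Lemma LB (S X T : {vspace E}) :
  (forall v, v \in T <-> v \in S /\ forall x, x \in X -> om x v = 0) ->
  (\dim S <= \dim T + \dim X)%N.
Proof.
move=> hT; case: (LBs (vbasis X) S) => T0 [h0 d0].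
have eX : <<vbasis X>>%VS = X by apply: span_basis; apply: vbasisP.
rewrite size_tuple in d0; rewrite eX in h0.
have -> : T = T0 by apply: vs_ext => v; rewrite hT h0.
exact: d0.
Qed.

Section Radical.
Variables (Kv Rv : {vspace E}).
Hypothesis hK : forall v, v \in Kv <-> forall w, om w v = 0.
Hypothesis hR : forall v, v \in Rv <-> (forall w, om w v = 0) /\ Qz v.

Lemma LBK (S X T : {vspace E}) :
  (forall v, v \in T <-> v \in S /\ forall x, x \in X -> om x v = 0) ->
  (\dim S + \dim (X :&: Kv) <= \dim T + \dim X)%N.
Proof.
move=> hT.
have hT' : forall v, v \in T <-> v \in S /\ forall x, x \in (X :\: Kv)%VS -> om x v = 0.
  move=> v; rewrite hT; split; move=> [vS hx]; split=> // x xX.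
    by apply: hx; apply: (subvP (diffvSl X Kv)).
  move: xX; rewrite -{1}(addv_diff_cap X Kv) => /memv_addP [c cC [k kK ->]].
  rewrite omDl hx // add0r; apply: om_sym0.
  by move: kK; rewrite memv_cap => /andP [_ /hK]; apply.
have := LB hT'; have := dimv_cap_compl X Kv; lia.
Qed.

Lemma dim_perp (X T : {vspace E}) :
  (forall v, v \in T <-> forall x, x \in X -> om x v = 0) ->
  (\dim T + \dim X = \dim (fullv : {vspace E}) + \dim (X :&: Kv))%N.
Proof.
move=> hT.
have h1 : (\dim (fullv : {vspace E}) + \dim (X :&: Kv) <= \dim T + \dim X)%N.
  apply: LBK => v; rewrite hT; split; [move=> h; split=> //; exact: memvf | by case].
pose C := (X :\: Kv)%VS; pose D := (T^C)%VS.
have sp : subpred (fun v => v \in C /\ forall d, d \in D -> om d v = 0).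
  split; first by split; [exact: mem0v | move=> d _; exact: om0r].
  move=> a u v [uC hu] [vC hv]; split; first by apply: memvD => //; apply: memvZ.
  by move=> d dD; rewrite omDr omZr hu // hv // mul0r addr0.
case: (exists_vs sp) => Z hZ.
have h2 := LB hZ.
have Z0 : (Z <= 0)%VS.
  apply/subvP => z /hZ [zC hz].
  have : z \in (C :&: Kv)%VS.
    rewrite memv_cap zC /=; apply/hK => w.
    have : w \in (T + D)%VS by rewrite addv_complf memvf.
    move=> /memv_addP [t tT [d dD ->]]; rewrite omDl (hz d dD) addr0.
    apply: om_sym0; move/hT: tT; apply.
    exact: (subvP (diffvSl X Kv)).
  by rewrite capv_diff.
have := dimvS Z0; rewrite dimv0 leqn0 => /eqP dZ.
have := dimv_compl T; have := dimv_cap_compl X Kv.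
have := dimvS (subvf T); have := dimvS (capvSl X Kv).
rewrite -/C -/D; lia.
Qed.

Lemma iso_capK X : iso X -> (Rv <= X)%VS -> (X :&: Kv)%VS = Rv.
Proof.
move=> iX RX; apply: vs_ext => v; rewrite memv_cap; split.
  move=> /andP [vX /hK vK]; apply/hR; split=> //.
  by case: (iX v v vX vX).
move=> vR; rewrite (subvP RX) //=; apply/hK; by case/hR: vR.
Qed.

Lemma dim_perp_iso (X T : {vspace E}) : iso X -> (Rv <= X)%VS ->
  (forall v, v \in T <-> forall x, x \in X -> om x v = 0) ->
  (\dim T + \dim X = \dim (fullv : {vspace E}) + \dim Rv)%N.
Proof. by move=> iX RX hT; rewrite (dim_perp hT) iso_capK. Qed.

End Radical.

Lemma iso_sub (A B : {vspace E}) : iso B -> (A <= B)%VS -> iso A.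
Proof. by move=> iB /subvP AB v w vA wA; apply: iB; apply: AB. Qed.

Lemma iso_line v : Qz v -> iso <[v]>.
Proof.
move=> Qv x y /vlineP [a ->] /vlineP [b ->]; split; last exact: QzZ.
by rewrite omZl omZr omQ // mul0r mulr0.
Qed.

Lemma iso_add (A B : {vspace E}) : iso A -> iso B ->
  (forall a b, a \in A -> b \in B -> om a b = 0) -> iso (A + B).
Proof.
move=> iA iB hAB x y /memv_addP [a aA [b bB ->]] /memv_addP [a' aA' [b' bB' ->]].
split.
  have [h1 _] := iA a a' aA aA'; have [h2 _] := iB b b' bB bB'.
  rewrite !omDl !omDr h1 h2 (hAB a b' aA bB') (om_sym0 (hAB a' b aA' bB)).
  by rewrite !addr0.
apply: QzD; [by case: (iA a a aA aA) | by case: (iB b b bB bB) | exact: hAB].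
Qed.

Lemma iso_addv (A : {vspace E}) v : iso A -> Qz v ->
  (forall a, a \in A -> om a v = 0) -> iso (A + <[v]>).
Proof.
move=> iA Qv h; apply: iso_add => //; first exact: iso_line.
by move=> a b aA /vlineP [k ->]; rewrite omZr h // mul0r.
Qed.

Lemma iso0 : iso 0%VS.
Proof. by apply: iso_sub (iso_line Qz0) _; apply: sub0v. Qed.

Definition maxl (W : {vspace E}) :=
  forall v, (forall w, w \in W -> om w v = 0) -> Qz v -> v \in W.

Lemma witt (W M : {vspace E}) : iso W -> maxl W -> iso M -> (\dim M <= \dim W)%N.
Proof.
move=> iW mW iM.
have spY : subpred (fun v => v \in W /\ forall m, m \in M -> om m v = 0).
  split; first by split; [exact: mem0v | move=> m _; exact: om0r].
  move=> a u v [uW hu] [vW hv]; split; first by apply: memvD => //; apply: memvZ.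
  by move=> m mM; rewrite omDr omZr hu // hv // mul0r addr0.
case: (exists_vs spY) => Y hY.
pose C := (W :\: Y)%VS.
have spT : subpred (fun v => v \in M /\ forall c, c \in C -> om c v = 0).
  split; first by split; [exact: mem0v | move=> m _; exact: om0r].
  move=> a u v [uW hu] [vW hv]; split; first by apply: memvD => //; apply: memvZ.
  by move=> m mM; rewrite omDr omZr hu // hv // mul0r addr0.
case: (exists_vs spT) => T hT.
have h1 := LB hT.
have TWY : (T <= W :&: Y)%VS.
  apply/subvP => v /hT [vM hv].
  have vW : v \in W.
    apply: mW; last by case: (iM v v vM vM).
    move=> w; rewrite -{1}(addv_diff_cap W Y) => /memv_addP [c cC [y yY ->]].
    rewrite omDl hv // add0r; apply: om_sym0.
    move: yY; rewrite memv_cap => /andP [_ /hY [_ hy]]; exact: hy.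
  rewrite memv_cap vW /=; apply/hY; split=> // m mM.
  by case: (iM m v mM vM).
have := dimvS TWY; have := dimv_cap_compl W Y; rewrite -/C; lia.
Qed.

Lemma ext_max (A : {vspace E}) : iso A ->
  exists M, [/\ iso M, (A <= M)%VS & maxl M].
Proof.
move=> iA.
pose D k := exists M : {vspace E}, [/\ iso M, (A <= M)%VS & \dim M = k].
have ub : forall k, D k -> (k <= \dim (fullv : {vspace E}))%N.
  by move=> k [M [_ _ <-]]; apply: dimvS; apply: subvf.
have ex : exists k, D k by exists (\dim A), A; split=> //; exact: subvv.
case: (max_exists ex ub) => m [[M [iM AM dM]] hm].
exists M; split=> // v hv Qv.
case: (boolP (v \in M)) => // nv; exfalso.
have : D (\dim (M + <[v]>)).
  exists (M + <[v]>)%VS; split=> //; first exact: iso_addv.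
  exact: subv_trans AM (addvSl _ _).
move/hm; rewrite -dM; apply/negP; rewrite -ltnNge; apply: ltdim; first exact: addvSl.
apply/negP => /subvP h; apply/negP: nv; rewrite negbK; apply: h.
by apply: (subvP (addvSr _ _)); apply: memv_line.
Qed.

Lemma maxiso_eq (S : E -> Prop) m :
  (exists W : {vspace E}, [/\ (forall v, v \in W -> S v), iso W & \dim W = m]) ->
  (forall W : {vspace E}, (forall v, v \in W -> S v) -> iso W -> (\dim W <= m)%N) ->
  maxiso sigma eps Lam q S = m.
Proof.
move=> [W0 [h0 i0 d0]] hm; rewrite /maxiso.
apply: (@bigmax_eq _ (fun i => exists W : {vspace E},
   (forall v, v \in W -> S v) /\ iso W /\ \dim W = i)).
- by exists W0.
- by rewrite -d0; apply: dimvS; apply: subvf.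
- by move=> k _ [W [hW [iW <-]]]; apply: hm.
Qed.

Lemma dimset_eq (P : E -> Prop) (V : {vspace E}) :
  (forall v, v \in V <-> P v) -> dimset P = \dim V.
Proof.
move=> hV; rewrite /dimset.
apply: (@bigmax_eq _ (fun i => exists W : {vspace E},
   (forall v, v \in W -> P v) /\ \dim W = i)).
- by exists V; split=> // v /(hV v).
- by apply: dimvS; apply: subvf.
- move=> k _ [W [hW <-]]; apply: dimvS; apply/subvP => v /hW Pv.
  exact: (proj2 (hV v)).
Qed.

Section Main.
Variables (Kv Rv : {vspace E}).
Hypothesis hK : forall v, v \in Kv <-> forall w, om w v = 0.
Hypothesis hR : forall v, v \in Rv <-> (forall w, om w v = 0) /\ Qz v.
Variables (U Up : {vspace E}).
Hypothesis hU : Pomega sigma eps Lam q U.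
Hypothesis hUp : forall v, v \in Up <-> perp sigma eps q U v.
Variable (mi : nat).
Hypothesis hmi1 : forall W, iso W -> (\dim W <= mi)%N.
Hypothesis hmi2 : exists W, iso W /\ \dim W = mi.

Local Notation P0 := (Pomega sigma eps Lam q).
Local Notation P1 := (PomegaU sigma eps Lam q U).
Local Notation n := (\dim (fullv : {vspace E})).
Local Notation d := (\dim Rv).

Lemma L_Rset v : Rset sigma eps Lam q (@allE F E) v <-> v \in Rv.
Proof.
rewrite hR /Rset /Kset /allE; split.
  by move=> [[_ h] Qv]; split=> // w; apply: h.
by move=> [h Qv]; split=> //; split=> // w _; apply: h.
Qed.

Lemma Riso : iso Rv.
Proof.
by move=> v w /hR [hv Qv] /hR [hw _]; split=> //.
Qed.

Lemma RK : (Rv <= Kv)%VS.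
Proof. by apply/subvP => v /hR [h _]; apply/hK. Qed.

Lemma Rmax M : maxl M -> (Rv <= M)%VS.
Proof. by move=> mM; apply/subvP => v /hR [h Qv]; apply: mM => // w _; apply: h. Qed.

Lemma full_iso : iso fullv -> (fullv <= Rv)%VS.
Proof.
move=> iF; apply/subvP => v _; apply/hR; split.
  by move=> w; case: (iF w v (memvf _) (memvf _)).
by case: (iF v v (memvf _) (memvf _)).
Qed.

Lemma P0E W : P0 W <-> [/\ iso W, (Rv <= W)%VS & ~~ (W <= Rv)%VS].
Proof.
split.
  case=> iW hRW [v vW nv] _; split=> //.
    by apply/subvP => x /L_Rset; apply: hRW.
  by apply/subvPn; exists v => //; apply/negP => /L_Rset.
case=> iW RW /subvPn [v vW vR]; split=> //.
- by move=> x /L_Rset; apply: (subvP RW).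
- by exists v => // /L_Rset; apply/negP.
- apply/negP => /eqP WF; subst W; apply/negP: vR; rewrite negbK.
  exact: (subvP (full_iso iW)).
Qed.

Lemma max_dim M : iso M -> maxl M -> \dim M = mi.
Proof.
move=> iM mM; apply/eqP; rewrite eqn_leq hmi1 //=.
by case: hmi2 => W [iW <-]; apply: witt.
Qed.

Lemma ext_mi A : iso A -> exists M, [/\ iso M, (A <= M)%VS, \dim M = mi & maxl M].
Proof.
move=> iA; case: (ext_max iA) => M [iM AM mM]; exists M; split=> //.
exact: max_dim.
Qed.

Lemma hU0 : [/\ iso U, (Rv <= U)%VS & ~~ (U <= Rv)%VS].
Proof. exact/P0E. Qed.

Lemma dU : (d < \dim U)%N.
Proof. by case: hU0 => _ RU nUR; apply: ltdim. Qed.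

Lemma Up_spec v : v \in Up <-> forall x, x \in U -> om x v = 0.
Proof.
rewrite hUp /perp; split=> h u uU; apply: om_sym0; exact: h.
Qed.

Lemma dUp : (\dim Up + \dim U = n + d)%N.
Proof. by case: hU0 => iU RU _; apply: (dim_perp_iso hK hR iU RU Up_spec). Qed.

Lemma UUp : (U <= Up)%VS.
Proof.
by case: hU0 => iU _ _; apply/subvP => u uU; apply/Up_spec => x xU; case: (iU x u).
Qed.

Lemma RUp : (Rv <= Up)%VS.
Proof. by case: hU0 => _ RU _; exact: subv_trans RU UUp. Qed.

Lemma P1E W : P1 W <-> P0 W /\ (fullv <= W + Up)%VS.
Proof.
split.
  case=> h0 h; split=> //; apply/subvP => e _.
  case: (h e) => w [u [wW uU ->]]; apply: memv_add => //; exact/hUp.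
case=> h0 h; split=> // e.
have : e \in (W + Up)%VS by apply: (subvP h); apply: memvf.
by case/memv_addP => w wW [u /hUp uU ->]; exists w, u.
Qed.

Lemma dimP1 W : (Rv <= W)%VS -> (fullv <= W + Up)%VS -> (\dim U <= \dim W)%N.
Proof.
move=> RW hF.
have h1 := dimv_sum_cap W Up.
have h2 : \dim (W + Up) = n.
  by apply/eqP; rewrite eqn_leq dimvS ?subvf //= dimvS.
have h3 : (d <= \dim (W :&: Up))%N by apply: dimvS; rewrite subv_cap RW RUp.
have := dUp; lia.
Qed.

Lemma P0_of X : iso X -> (Rv <= X)%VS -> ~~ (X <= Rv)%VS -> P0 X.
Proof. by move=> *; apply/P0E. Qed.

Lemma Hdim0 W : P0 W -> (d < \dim W <= mi)%N.
Proof. by case/P0E => iW RW nWR; rewrite ltdim //= hmi1. Qed.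

Lemma Hconv0 A B X : P0 A -> P0 B -> (A <= X)%VS -> (X <= B)%VS -> P0 X.
Proof.
move=> /P0E [iA RA nAR] /P0E [iB RB nBR] AX XB; apply: P0_of.
- exact: iso_sub iB XB.
- exact: subv_trans RA AX.
- by apply: contra nAR => XR; exact: subv_trans AX XR.
Qed.

Lemma Hbot0 B : P0 B -> (d.+1 < \dim B)%N -> exists X, P0 X /\ ltv X B.
Proof.
move=> PB; case/P0E: (PB) => iB RB /subvPn [x xB xR] hd.
have XB : (Rv + <[x]> <= B)%VS by rewrite subv_add RB -memvE.
exists (Rv + <[x]>)%VS; split.
  apply: P0_of; [exact: iso_sub iB XB | exact: addvSl |].
  apply/subvPn; exists x => //; apply: (subvP (addvSr _ _)); exact: memv_line.
rewrite /ltv XB /=; apply/negP => /eqP e.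
by have := dim_addline Rv x; rewrite e; lia.
Qed.

Lemma Htop0 A : P0 A -> (\dim A < mi)%N -> exists X, P0 X /\ ltv A X.
Proof.
move=> /P0E [iA RA nAR] hd.
case: (ext_mi iA) => M [iM AM dM mM].
have : ~~ (M <= A)%VS by apply/negP => /dimvS; lia.
case/subvPn => x xM xA.
have XM : (A + <[x]> <= M)%VS by rewrite subv_add AM -memvE.
have AX : (A <= A + <[x]>)%VS by apply: addvSl.
exists (A + <[x]>)%VS; split.
  apply: P0_of; [exact: iso_sub iM XM | exact: subv_trans RA AX |].
  by apply: contra nAR => XR; exact: subv_trans AX XR.
rewrite /ltv AX /=; apply/negP => /eqP e; apply/negP: xA; rewrite negbK e.
by apply: (subvP (addvSr _ _)); apply: memv_line.
Qed.

Lemma Hdim1 W : P1 W -> ((\dim U).-1 < \dim W <= mi)%N.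
Proof.
case/P1E => /P0E [iW RW _] hF; rewrite hmi1 // andbT.
have := dimP1 RW hF; have := dU; lia.
Qed.

Lemma Hconv1 A B X : P1 A -> P1 B -> (A <= X)%VS -> (X <= B)%VS -> P1 X.
Proof.
move=> /P1E [PA hA] /P1E [PB hB] AX XB; apply/P1E; split.
  exact: Hconv0 PA PB AX XB.
apply: subv_trans hA _; apply: addvS => //; exact: subvv.
Qed.

Lemma Htop1 A : P1 A -> (\dim A < mi)%N -> exists X, P1 X /\ ltv A X.
Proof.
move=> /P1E [PA hA] hd; case: (Htop0 PA hd) => X [PX AX].
exists X; split=> //; apply/P1E; split=> //.
apply: subv_trans hA _; apply: addvS; [exact: ltv_le | exact: subvv].
Qed.

Lemma Hbot1 B : P1 B -> ((\dim U).-1.+1 < \dim B)%N -> exists X, P1 X /\ ltv X B.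
Proof.
move=> /P1E [PB hB] hd; case/P0E: (PB) => iB RB nBR.
pose Y := (B :&: Up)%VS; pose D := (B :\: Y)%VS.
have XB : (D + Rv <= B)%VS by rewrite subv_add RB diffvSl.
have hX : (fullv <= D + Rv + Up)%VS.
  apply/subvP => e _.
  have : e \in (B + Up)%VS by apply: (subvP hB); apply: memvf.
  case/memv_addP => w wB [p pU ->].
  move: wB; rewrite -{1}(addv_diff_cap B Y) => /memv_addP [x xD [y yY ->]].
  rewrite -addrA; apply: memv_add.
    by apply: (subvP (addvSl _ _)).
  apply: memvD => //.
  by move: yY; rewrite !memv_cap => /andP [_ /andP [_ ->]].
have RX : (Rv <= D + Rv)%VS by apply: addvSr.
have dX := dimP1 RX hX.
exists (D + Rv)%VS; split.
  apply/P1E; split=> //; apply: P0_of => //; first exact: iso_sub iB XB.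
  apply/negP => /dimvS; have := dU; lia.
rewrite /ltv XB /=; apply/negP => /eqP e.
have h1 := dimv_sum_cap B Up.
have h2 : \dim (B + Up) = n.
  by apply/eqP; rewrite eqn_leq dimvS ?subvf //= dimvS.
have h3 := dimv_cap_compl B Y.
have h4 : (\dim Y <= \dim (B :&: Y))%N.
  by apply: dimvS; rewrite subv_cap capvSl subvv.
have h5 := (dimv_add_leqif D Rv).1.
have := dUp; rewrite -/Y -/D in h1 h3 h4 h5 *; rewrite e in h5; lia.
Qed.


Lemma perp_sub (X : {vspace E}) :
  subpred (fun v => forall x, x \in X -> om x v = 0).
Proof.
split; first by move=> x _; exact: om0r.
by move=> a u v hu hv x xX; rewrite omDr omZr hu // hv // mul0r addr0.
Qed.

Lemma eps_neq0 : eps != 0.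
Proof. by apply/eqP => e; have := epsK; rewrite e mul0r => /eqP; rewrite eq_sym oner_eq0. Qed.

Lemma Hne1 : exists X, P1 X.
Proof.
case: hU0 => iU RU nUR.
pose D k := exists W : {vspace E},
  [/\ iso W, (Rv <= W)%VS, (W :&: Up <= Rv)%VS & \dim W = k].
have ub : forall k, D k -> (k <= n)%N.
  by move=> k [W [_ _ _ <-]]; apply: dimvS; apply: subvf.
have ex : exists k, D k by exists d, Rv; split; [exact: Riso | exact: subvv | exact: capvSl | by []].
case: (max_exists ex ub) => m [[W [iW RW WUR dW]] hm].
have WUd : \dim (W :&: Up) = d.
  apply/eqP; rewrite eqn_leq dimvS //=; apply: dimvS; by rewrite subv_cap RW RUp.
case: (boolP (fullv <= W + Up)%VS) => hF.
  exists W; apply/P1E; split=> //; apply: P0_of => //.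
  apply/negP => /dimvS; have := dimP1 RW hF; have := dU; lia.
exfalso.
have s1 : (\dim (W + Up) < n)%N by apply: ltdim => //; exact: subvf.
have s2 := dimv_sum_cap W Up.
have s3 := dUp.
have spT : subpred (fun v => v \in U /\ forall w, w \in W -> om w v = 0).
  split; first by split; [exact: mem0v | case: (perp_sub W)].
  move=> a u v [uU hu] [vU hv]; split; first by apply: memvD => //; apply: memvZ.
  by case: (perp_sub W) => _ h; apply: h.
case: (exists_vs spT) => T hT.
have h4 := LBK hK hT; rewrite (iso_capK hK hR iW RW) in h4.
have : ~~ (T <= Rv)%VS by apply/negP => /dimvS; lia.
case/subvPn => u /hT [uU hu] uR.
have Qu : Qz u by case: (iU u u uU uU).
have uUp : u \in Up by apply: (subvP UUp).
have uW : u \notin W.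
  apply/negP => uW; apply/negP: uR; rewrite negbK; apply: (subvP WUR).
  by rewrite memv_cap uW uUp.
pose X := (W + <[u]>)%VS.
have iX : iso X by apply: iso_addv.
have RX : (Rv <= X)%VS by apply: subv_trans RW (addvSl _ _).
have dX : (\dim W < \dim X)%N.
  apply: ltdim; first exact: addvSl.
  apply/negP => /subvP h; apply/negP: uW; rewrite negbK; apply: h.
  by apply: (subvP (addvSr _ _)); apply: memv_line.
case: (exists_vs (perp_sub W)) => Wp hWp.
case: (exists_vs (perp_sub X)) => Xp hXp.
have e1 := dim_perp_iso hK hR iW RW hWp.
have e2 := dim_perp_iso hK hR iX RX hXp.
have : ~~ (Wp <= Xp)%VS by apply/negP => /dimvS; lia.
case/subvPn => h /hWp hW hX.
have al : om u h != 0.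
  apply/negP => /eqP al; apply/negP: hX; rewrite negbK; apply/hXp => x.
  case/memv_addP => w wW [y /vlineP [k ->] ->].
  by rewrite omDl omZl hW // al mulr0 addr0.
pose h1' := (om u h)^-1 *: h.
have hW1 : forall w, w \in W -> om w h1' = 0.
  by move=> w wW; rewrite omZr hW // mul0r.
have u1 : om u h1' = 1 by rewrite omZr mulfV.
clearbody h1'.
pose lam := - (sigma eps * q h1' h1').
pose h2 := h1' + lam *: u.
have hW2 : forall w, w \in W -> om w h2 = 0.
  by move=> w wW; rewrite omDr hW1 // omZr hu // mul0r addr0.
have u2 : om u h2 = 1 by rewrite omDr u1 omZr omQ // mul0r addr0.
have h2u : om h2 u = eps by rewrite om_sym u2 rmorph1 mulr1.
have Q2 : Qz h2.
  rewrite /Qzero.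
  pose c := sigma lam * q u h1'.
  have eq1 : q h1' u = eps - eps * sigma (q u h1').
    have : om h1' u = eps by rewrite om_sym u1 rmorph1 mulr1.
    rewrite /omega => /(congr1 (fun x => x - eps * sigma (q u h1'))).
    by rewrite addrK.
  have eq2 : q h1' h1' = - (eps * lam).
    by rewrite /lam mulrN mulrA epsK mul1r opprK.
  have -> : q h2 h2 = (c - eps * sigma c) + sigma lam * q u u * lam.
    rewrite /h2 qDl !qDr qZZ qZl qZr eq1 /c rmorphM sigK.
    rewrite {1}eq2; ring.
  by apply: LamD; [apply: Lam_tr | apply: Lam_conj].
pose W' := (W + <[h2]>)%VS.
have iW' : iso W' by apply: iso_addv.
have RW' : (Rv <= W')%VS by apply: subv_trans RW (addvSl _ _).
have W'U : (W' :&: Up <= Rv)%VS.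
  apply/subvP => x; rewrite memv_cap => /andP [/memv_addP [w wW [y /vlineP [k ->] ->]]].
  move=> /hUp hx.
  have := hx u uU; rewrite omDl omZl h2u (om_sym0 (om_sym0 (hu w wW))) add0r => /eqP.
  rewrite mulf_eq0 (negbTE eps_neq0) orbF fmorph_eq0 => /eqP k0.
  move: hx; rewrite k0 scale0r addr0 => hx.
  by apply: (subvP WUR); rewrite memv_cap wW /=; apply/hUp.
have dW' : (\dim W < \dim W')%N.
  apply: ltdim; first exact: addvSl.
  apply/negP => /subvP hh; have : h2 \in W.
    by apply: hh; apply: (subvP (addvSr _ _)); apply: memv_line.
  move=> h2W; have := hu h2 h2W; rewrite h2u => /eqP.
  by rewrite (negbTE eps_neq0).
have : D (\dim W') by exists W'.
by move/hm; rewrite -dW; apply/negP; rewrite -ltnNge.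
Qed.

Lemma maxiso_perp : maxiso sigma eps Lam q (perp sigma eps q U) = mi.
Proof.
case: hU0 => iU RU nUR.
apply: maxiso_eq.
  case: (ext_mi iU) => M [iM UM dM _]; exists M; split=> //.
  by move=> v vM u uU; case: (iM v u vM (subvP UM u uU)).
by move=> W _ iW; apply: hmi1.
Qed.

Lemma dimset_perp : dimset (Rset sigma eps Lam q (perp sigma eps q U)) = \dim U.
Proof.
case: hU0 => iU RU nUR.
apply: dimset_eq => v; rewrite /Rset /Kset; split.
  move=> vU; split; last by case: (iU v v vU vU).
  split; first by move=> u uU; case: (iU v u vU uU).
  by move=> w hw; apply: hw.
move=> [[pv hv] Qv]; case: (boolP (v \in U)) => // nv; exfalso.
pose X := (U + <[v]>)%VS.
have iX : iso X by apply: iso_addv => // u uU; apply: om_sym0; apply: pv.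
have RX : (Rv <= X)%VS by apply: subv_trans RU (addvSl _ _).
have dX : (\dim U < \dim X)%N.
  apply: ltdim; first exact: addvSl.
  apply/negP => /subvP h; apply/negP: nv; rewrite negbK; apply: h.
  by apply: (subvP (addvSr _ _)); apply: memv_line.
case: (exists_vs (perp_sub X)) => Xp hXp.
have e2 := dim_perp_iso hK hR iX RX hXp.
have : (Up <= Xp)%VS.
  apply/subvP => w /hUp pw; apply/hXp => x /memv_addP [u uU [y /vlineP [k ->] ->]].
  rewrite omDl omZl (om_sym0 (pw u uU)) (om_sym0 (hv w pw)) mulr0 addr0 //.
move/dimvS; have := dUp; lia.
Qed.

Lemma main_res :
  [/\ graded P0 /\ poset_dim P0 ((mi - d)%N%:Z - 1),
      graded P1 /\ poset_dim P1 ((mi - (\dim U).-1)%N%:Z - 1),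
      maxiso sigma eps Lam q (perp sigma eps q U) = mi,
      dimset (Rset sigma eps Lam q (perp sigma eps q U)) = \dim U &
      [/\ maxiso sigma eps Lam q (@allE F E) = mi,
          dimset (Rset sigma eps Lam q (@allE F E)) = d &
          (d < \dim U <= mi)%N]].
Proof.
split.
- exact: (chains_main Hdim0 Hconv0 Hbot0 Htop0 (ex_intro _ U hU)).
- exact: (chains_main Hdim1 Hconv1 Hbot1 Htop1 Hne1).
- exact: maxiso_perp.
- exact: dimset_perp.
split.
- apply: maxiso_eq; last by move=> W _ iW; apply: hmi1.
  by case: hmi2 => W [iW dW]; exists W.
- by apply: dimset_eq => v; rewrite L_Rset.
- exact: Hdim0.
Qed.
End Main.

Lemma final (U : {vspace E}) (hU : Pomega sigma eps Lam q U) :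
  let gE := genus sigma eps Lam q (allE (E := E)) in
  let dimR := (dimset (Rset sigma eps Lam q (allE (E := E))))%:Z in
  [/\ graded (Pomega sigma eps Lam q),
      poset_dim (Pomega sigma eps Lam q) (gE - 1),
      graded (PomegaU sigma eps Lam q U),
      poset_dim (PomegaU sigma eps Lam q U) (gE - (\dim U)%:Z + dimR)
    & gE - (\dim U)%:Z + dimR = genus sigma eps Lam q (perp sigma eps q U)].
Proof.
have spK : subpred (fun v => forall w, om w v = 0).
  split; first by move=> w; exact: om0r.
  by move=> a u v hu hv w; rewrite omDr omZr hu hv mul0r addr0.
have spR : subpred (fun v => (forall w, om w v = 0) /\ Qz v).
  split; first by split; [move=> w; exact: om0r | exact: Qz0].
  move=> a u v [hu Qu] [hv Qv]; split.
    by move=> w; rewrite omDr omZr hu hv mul0r addr0.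
  apply: QzD => //; first exact: QzZ.
  all: try by rewrite omZl (om_sym0 (hu v)) mulr0.
have spU : subpred (perp sigma eps q U).
  split; first by move=> u _; exact: om0l.
  by move=> a x y hx hy u uU; rewrite omDl omZl hx // hy // mulr0 addr0.
case: (exists_vs spK) => Kv hK.
case: (exists_vs spR) => Rv hR.
case: (exists_vs spU) => Up hUp.
pose D k := exists W, iso W /\ \dim W = k.
have ub : forall k, D k -> (k <= \dim (fullv : {vspace E}))%N.
  by move=> k [W [_ <-]]; apply: dimvS; apply: subvf.
have ex : exists k, D k by exists 0%N, 0%VS; split; [exact: iso0 | exact: dimv0].
case: (max_exists ex ub) => mi [hmi2 hm].
have hmi1 : forall W, iso W -> (\dim W <= mi)%N by move=> W iW; apply: hm; exists W.
have [[g0 p0] [g1 p1] e1 e2 [e3 e4 dd]] :=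
  main_res hK hR hU hUp hmi1 hmi2.
move=> gE dimR; rewrite /gE /dimR /genus e1 e2 e3 e4.
split => //.
- by have -> : mi%:Z - (\dim Rv)%:Z - 1 = (mi - \dim Rv)%N%:Z - 1 by lia.
- by have -> : mi%:Z - (\dim Rv)%:Z - (\dim U)%:Z + (\dim Rv)%:Z =
      (mi - (\dim U).-1)%N%:Z - 1 by lia.
- lia.
Qed.
End Basics.

Theorem lemma4p4 (F : fieldType) (sigma : {rmorphism F -> F}) (eps : F)
    (Lam : F -> Prop) (E : vectType F) (q : E -> E -> F)
    (hLam : form_parameter sigma eps Lam)
    (hq : sesquilinear sigma q)
    (U : {vspace E}) (hU : Pomega sigma eps Lam q U) :
  let gE := genus sigma eps Lam q (allE (E := E)) in
  let dimR := (dimset (Rset sigma eps Lam q (allE (E := E))))%:Z in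
  [/\ graded (Pomega sigma eps Lam q),
      poset_dim (Pomega sigma eps Lam q) (gE - 1),
      graded (PomegaU sigma eps Lam q U),
      poset_dim (PomegaU sigma eps Lam q U) (gE - (\dim U)%:Z + dimR)
    & gE - (\dim U)%:Z + dimR = genus sigma eps Lam q (perp sigma eps q U)].
Proof. exact: (final hLam hq hU). Qed.
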